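(* Let $K$ be a field, $A\subset K$ and $B\subset K$ finite sets with $|A|=m$, $|B|=n$. Let $0\le p\le m$, $0\le q\le n$, set $d:=p+q$ and assume $d\le\min\{m-1,n-1\}$. Then $$\operatorname{Syl}_{p,q}(A,B)=(-1)^{p(m-d)}\binom{d}{p}\operatorname{Syl}_{0,d}(A,B).$$
   Context: For finite sets $Y,Z$, $\mathcal{R}(Y,Z):=\prod_{y\in Y,z\in Z}(y-z)$ (equal to $1$ if $Y$ or $Z$ is empty), and $\mathcal{R}(x,Z):=\mathcal{R}(\{x\},Z)$. For $0\le p\le m$, $0\le q\le n$, $$\operatorname{Syl}_{p,q}(A,B)(x):=\sum_{\substack{A'\subset A,\ B'\subset B\\ |A'|=p,\ |B'|=q}}\mathcal{R}(A',B')\,\mathcal{R}(A\setminus A',B\setminus B')\,\frac{\mathcal{R}(x,A')\,\mathcal{R}(x,B')}{\mathcal{R}(A',A\setminus A')\,\mathcal{R}(B',B\setminus B')}.$$ *)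

(* Defs.v *)
From HB Require Import structures.
From mathcomp Require Import all_boot all_order all_algebra.
From mathcomp Require Import finmap.
Set Implicit Arguments. Unset Strict Implicit. Unset Printing Implicit Defensive.
Import Order.TTheory GRing.Theory.
Local Open Scope ring_scope.
Local Open Scope fset_scope.

Section Syl.
Variable K : fieldType.

Definition Rres (Y Z : {fset K}) : K :=
  \prod_(y <- Y) \prod_(z <- Z) (y - z).

Definition RresX (Z : {fset K}) : {poly K} :=
  \prod_(z <- Z) ('X - z%:P).

Definition Syl (p q : nat) (A B : {fset K}) : {poly K} :=
  \sum_(A' <- fpowerset A | #|` A'| == p)
   \sum_(B' <- fpowerset B | #|` B'| == q)
     ((Rres A' B' * Rres (A `\` A') (B `\` B'))
        / (Rres A' (A `\` A') * Rres B' (B `\` B')))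
       *: (RresX A' * RresX B').

End Syl.

(* Main.v *)
Require Import Defs.
From HB Require Import structures.
From mathcomp Require Import all_boot all_order all_algebra.
From mathcomp Require Import fingroup perm.
From mathcomp Require Import finmap.
From mathcomp Require Import ring.
From mathcomp Require Import fraction.
Set Implicit Arguments. Unset Strict Implicit. Unset Printing Implicit Defensive.
Import GRing.Theory.
Local Open Scope ring_scope.
Local Open Scope fset_scope.
Section Basic.
Variable L : fieldType.
Implicit Types X Y Z S : {fset L}.

Lemma big_fsetU_disj (R : Type) (idx : R) (op : Monoid.com_law idx)
   X Y (F : L -> R) : [disjoint X & Y] ->
  \big[op/idx]_(i <- X `|` Y) F i = op (\big[op/idx]_(i <- X) F i) (\big[op/idx]_(i <- Y) F i).
Proof.
move=> dXY; rewrite -big_cat; apply: perm_big; apply: uniq_perm.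
- exact: fset_uniq.
- rewrite cat_uniq !fset_uniq /= andbT; apply/hasPn => x xY.
  by apply: (fdisjointP_sym dXY).
- by move=> x; rewrite mem_cat !inE.
Qed.

Lemma RresUl X Y Z : [disjoint X & Y] -> Rres (X `|` Y) Z = Rres X Z * Rres Y Z.
Proof. by move=> d; rewrite /Rres big_fsetU_disj. Qed.

Lemma RresUr X Y Z : [disjoint Y & Z] -> Rres X (Y `|` Z) = Rres X Y * Rres X Z.
Proof.
by move=> d; rewrite /Rres -big_split /=; apply: eq_bigr => x _; rewrite big_fsetU_disj.
Qed.

Lemma prod_subC (s : seq L) x :
  \prod_(y <- s) (y - x) = (-1) ^+ size s * \prod_(y <- s) (x - y).
Proof.
elim: s => [|y s IH]; first by rewrite !big_nil mulr1.
by rewrite !big_cons IH exprS -opprB; ring.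
Qed.

Lemma prod_const_seq (I : Type) (s : seq I) (c : L) :
  \prod_(i <- s) c = c ^+ size s.
Proof. by elim: s => [|x s IH]; rewrite ?big_nil ?big_cons ?IH ?exprS. Qed.

Lemma RresC X Y : Rres Y X = (-1) ^+ (#|` X| * #|` Y|) * Rres X Y.
Proof.
rewrite /Rres exchange_big /=.
under eq_bigr => x _ do rewrite prod_subC.
by rewrite big_split /= prod_const_seq -exprM mulnC.
Qed.

Lemma Rres_neq0 X Y : [disjoint X & Y] -> Rres X Y != 0.
Proof.
move=> d; rewrite /Rres prodf_seq_neq0; apply/allP => x xX /=.
rewrite prodf_seq_neq0; apply/allP => y yY /=; rewrite subr_eq0.
by apply: contraTneq yY => <-; apply: (fdisjointP d).
Qed.

End Basic.
Section Lag.
Variable L : fieldType.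
Implicit Types X Y Z S C : {fset L}.

Definition hp C (s : L) : L := \prod_(c <- C `\ s) (s - c).

Lemma hp_neq0 C s : hp C s != 0.
Proof.
rewrite /hp prodf_seq_neq0; apply/allP => c cC /=; rewrite subr_eq0.
by apply: contraTneq cC => ->; rewrite fsetD11.
Qed.

Lemma lagrange C k : (k.+2 <= #|` C|)%N -> \sum_(c <- C) c ^+ k / hp C c = 0.
Proof.
move=> hk.
pose Q := \sum_(c <- C) (c ^+ k / hp C c) *: \prod_(c' <- C `\ c) ('X - c'%:P).
have sCD c : c \in C -> #|` C `\ c|.+1 = #|` C|.
  by move=> cC; rewrite [in RHS](cardfsD1 c) cC.
have sQ : (size Q <= #|` C|)%N.
  apply: (leq_trans (size_sum _ _ _)); apply/bigmax_leqP_seq => c cC _.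
  by apply: (leq_trans (size_scale_leq _ _)); rewrite size_prod_XsubC sCD.
have QX : Q = 'X^k.
  apply/eqP; rewrite -subr_eq0; apply/negPn/negP => nz.
  have : all (root (Q - 'X^k)) C.
    apply/allP => c0 c0C; rewrite /root hornerD hornerN hornerXn horner_sum.
    rewrite (big_fsetD1 c0) //= (@big1_fset _ _ _ _ (C `\ c0) xpredT
      (fun i => ((i ^+ k / hp C i) *: \prod_(c' <- C `\ i) ('X - c'%:P)).[c0])) ?addr0.
      rewrite hornerZ horner_prod.
      under eq_bigr => i _ do rewrite hornerXsubC.
      by rewrite -/(hp C c0) mulfVK ?hp_neq0 // subrr.
    move=> c cD _; rewrite hornerZ horner_prod.
    have cc0 : c0 \in C `\ c.
      by rewrite !inE eq_sym c0C andbT; move: cD; rewrite !inE => /andP[].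
    rewrite (big_fsetD1 c0) //= hornerXsubC subrr mul0r mulr0 //.
  move=> /(max_poly_roots nz) /(_ (fset_uniq C)).
  apply/negP; rewrite -leqNgt; apply: (leq_trans (size_polyD _ _)).
  by rewrite geq_max size_polyN size_polyXn sQ /= (leq_trans _ hk).
have := congr1 (fun P : {poly L} => P`_(#|` C|.-1)) QX.
rewrite coefXn coef_sum.
have -> : (#|` C|.-1 == k) = false.
  by apply/negbTE; move: hk; case: (#|` C|) => // n; rewrite ltnS /= eq_sym => /ltn_eqF ->.
rewrite /= mulr0n => H; rewrite -[RHS]H; rewrite big_seq [RHS]big_seq; apply: eq_bigr => c cC; rewrite coefZ.
have mon := monic_prod_XsubC (C `\ c) xpredT id.
move: (mon) => /monicP; rewrite lead_coefE size_prod_XsubC sCD //.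
by move=> ->; rewrite mulr1.
Qed.

End Lag.

Section Term.
Variable L : fieldType.
Implicit Types X Y Z S C : {fset L}.

Definition yy C (s : L) : {poly L} := (hp C s)^-1 *: ('X - s%:P).
Definition Dl S : L := \prod_(s <- S) \prod_(s' <- S `\ s) (s - s').
Definition WW C S : {poly L} := Dl S *: \prod_(s <- S) yy C s.

Lemma prod_scale (I : Type) (r : seq I) (a : I -> L) (P : I -> {poly L}) :
  \prod_(i <- r) (a i *: P i) = (\prod_(i <- r) a i) *: \prod_(i <- r) P i.
Proof.
elim: r => [|x r IH]; first by rewrite !big_nil scale1r.
by rewrite !big_cons IH -scalerAl -scalerAr scalerA.
Qed.

Lemma Dl_neq0 S : Dl S != 0.
Proof.
rewrite /Dl prodf_seq_neq0; apply/allP => s sS /=.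
rewrite prodf_seq_neq0; apply/allP => s' s'S /=; rewrite subr_eq0.
by apply: contraTneq s'S => <-; rewrite fsetD11.
Qed.

Lemma prod_hp C S : S `<=` C -> \prod_(s <- S) hp C s = Dl S * Rres S (C `\` S).
Proof.
move=> SC; rewrite /Dl /Rres -big_split /=; apply: eq_big_seq => s sS.
rewrite /hp -big_fsetU_disj.
  apply: eq_fbigl => x; rewrite !inE.
  by case: (x =P s) => [->|_] /=; [rewrite sS | case: (x \in S) (fsubsetP SC x) => //= ->].
by apply/fdisjointP => x; rewrite !inE => /andP[_ ->].
Qed.

Lemma WW_eq C S : S `<=` C -> WW C S = (Rres S (C `\` S))^-1 *: RresX S.
Proof.
move=> SC; rewrite /WW /yy prod_scale prodfV prod_hp // scalerA invfM mulrA.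
by rewrite mulfV ?Dl_neq0 // mul1r.
Qed.

Variables (A B : {fset L}).
Hypothesis dAB : [disjoint A & B].

Lemma setCD A' B' : A' `<=` A -> B' `<=` B ->
  (A `|` B) `\` (A' `|` B') = (A `\` A') `|` (B `\` B').
Proof.
move=> /fsubsetP hA /fsubsetP hB; apply/fsetP => x; rewrite !inE.
have := fdisjointP dAB x; move: (hA x) (hB x).
by case: (x \in A'); case: (x \in B'); case: (x \in A); case: (x \in B) => //= ; auto.
Qed.

Lemma disjD X Y : [disjoint X & Y `\` X].
Proof. by apply/fdisjointP => x; rewrite !inE => ->. Qed.

Lemma disj_sub X Y : X `<=` A -> Y `<=` B -> [disjoint X & Y].
Proof.
move=> /fsubsetP hA /fsubsetP hB; apply/fdisjointP => x /hA xA.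
by apply/negP => /hB xB; have := fdisjointP dAB x xA; rewrite xB.
Qed.

Lemma TL A' B' : A' `<=` A -> B' `<=` B ->
  ((Rres A' B' * Rres (A `\` A') (B `\` B')) / (Rres A' (A `\` A') * Rres B' (B `\` B')))
    *: (RresX A' * RresX B')
  = ((-1) ^+ (#|` B'| * (#|` A| - #|` A'|)) * Rres A B) *: WW (A `|` B) (A' `|` B').
Proof.
move=> hA hB.
have dAB' := disj_sub hA hB.
have dDD : [disjoint A `\` A' & B `\` B'].
  by apply: disj_sub; apply: fsubsetDl.
rewrite WW_eq; last by apply: fsetUSS.
rewrite setCD // /RresX big_fsetU_disj //= -/(RresX A') -/(RresX B') scalerA.
congr (_ *: _).
have eA : A = A' `|` (A `\` A').
  by apply/fsetP => x; rewrite !inE; case: (boolP (x \in A')) => //= /(fsubsetP hA) ->.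
have eB : B = B' `|` (B `\` B').
  by apply/fsetP => x; rewrite !inE; case: (boolP (x \in B')) => //= /(fsubsetP hB) ->.
have -> : Rres A B = Rres A' B' * Rres A' (B `\` B') * (Rres (A `\` A') B' * Rres (A `\` A') (B `\` B')).
  rewrite {1}eA {1}eB RresUl ?disjD // !RresUr ?disjD //.
rewrite RresUl; last by apply: disj_sub.
rewrite !RresUr ?disjD //.
rewrite (RresC (A `\` A') B') cardfsDS //.
have n1 : Rres A' (A `\` A') != 0 by apply: Rres_neq0; apply: disjD.
have n2 : Rres B' (B `\` B') != 0 by apply: Rres_neq0; apply: disjD.
have n3 : Rres A' (B `\` B') != 0 by apply: Rres_neq0; apply: disj_sub => //; apply: fsubsetDl.
have n4 : Rres (A `\` A') B' != 0 by apply: Rres_neq0; apply: disj_sub => //; apply: fsubsetDl.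
have n5 : (-1) ^+ ((#|` A| - #|` A'|) * #|` B'|) != 0 :> L by rewrite signr_eq0.
rewrite mulnC.
set s := (-1) ^+ _.
have s2 : s * s = 1 by rewrite /s -expr2 sqrr_sign.
have n6 : s != 0 by rewrite /s signr_eq0.
by field; rewrite ?n1 ?n2 ?n3 ?n4 ?n6.
Qed.
End Term.

From mathcomp Require Import zify.

Section Tup.
Variable L : fieldType.
Variables (A B : {fset L}).
Hypothesis dAB : [disjoint A & B].
Variable d : nat.
Hypothesis hN : (2 * d < #|` A `|` B|)%N.
Local Notation C := (A `|` B).

Definition Vd (t : {ffun 'I_d -> C}) : L := \det (\matrix_(i, j) (val (t i)) ^+ j).
Definition Ft (t : {ffun 'I_d -> C}) : {poly L} :=
  Vd t *: \prod_i ((val (t i)) ^+ i *: yy C (val (t i))).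
Definition Mo (P : pred C) (k : nat) : {poly L} :=
  \sum_(c : C | P c) ((val c) ^+ k *: yy C (val c)).

Lemma Ft_expand (Q : 'I_d -> pred C) :
  \sum_(t in family Q) Ft t = \sum_(s : 'S_d) (-1) ^+ s *: \prod_i Mo (Q i) (s i + i).
Proof.
rewrite (eq_bigr (fun t : {ffun 'I_d -> C} => \sum_(s : 'S_d) (-1) ^+ s *:
     \prod_i ((val (t i)) ^+ (s i + i) *: yy C (val (t i))))); last first.
  move=> t _; rewrite /Ft /Vd /determinant scaler_suml; apply: eq_bigr => s _.
  rewrite -scalerA; congr (_ *: _).
  under [X in X *: _]eq_bigr => i _ do rewrite mxE.
  rewrite -prod_scale; apply: eq_bigr => i _.
  by rewrite scalerA exprD.
rewrite exchange_big /=; apply: eq_bigr => s _; rewrite -scaler_sumr; congr (_ *: _).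
by rewrite /Mo bigA_distr_big_dep.
Qed.


Lemma Mo_ext (P P' : pred C) k : P =1 P' -> Mo P k = Mo P' k.
Proof. by move=> e; apply: eq_bigl. Qed.

Lemma Mo_flip k : (k.+3 <= #|` C|)%N ->
  Mo (fun c => val c \in A) k = - Mo (fun c => val c \notin A) k.
Proof.
move=> hk.
have S0 : \sum_(c : C) (val c ^+ k *: yy C (val c)) = 0.
  rewrite -(big_seq_fsetE _ C xpredT (fun c => c ^+ k *: yy C c)) /=.
  have -> : \sum_(c <- C) c ^+ k *: yy C c =
     (\sum_(c <- C) c ^+ k / hp C c) *: 'X - (\sum_(c <- C) c ^+ k.+1 / hp C c)%:P.
    rewrite scaler_suml rmorph_sum -sumrB; apply: eq_bigr => c _.
    rewrite /yy scalerA scalerBr; congr (_ - _).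
    rewrite -mul_polyC -polyCM exprS; congr (_%:P); rewrite mulrAC; congr (_ * _); exact: mulrC.
  by rewrite !lagrange ?scale0r ?subr0 // (leq_trans _ hk).
rewrite (bigID (fun c : C => val c \in A)) /= in S0.
by apply/eqP; rewrite -subr_eq0 opprK; apply/eqP.
Qed.

Definition QA (S : {set 'I_d}) (i : 'I_d) : pred C := fun c => (val c \in A) == (i \in S).

Lemma flip (S : {set 'I_d}) :
  \sum_(t in family (QA S)) Ft t = (-1) ^+ #|S| *: \sum_(t in family (QA set0)) Ft t.
Proof.
rewrite !Ft_expand scaler_sumr; apply: eq_bigr => s _.
rewrite scalerA mulrC -scalerA; congr (_ *: _).
have e i : Mo (QA S i) (s i + i) =
    (if i \in S then - Mo (QA set0 i) (s i + i) else Mo (QA set0 i) (s i + i)).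
  have Q0 : QA set0 i =1 (fun c => val c \notin A).
    by move=> c; rewrite /QA inE eqbF_neg.
  rewrite (Mo_ext _ Q0); case: ifP => iS.
    rewrite (@Mo_ext _ (fun c => val c \in A)); last by move=> c; rewrite /QA iS eqb_id.
    apply: Mo_flip; have := ltn_ord (s i); have := ltn_ord i; lia.
  by apply: Mo_ext => c; rewrite /QA iS eqbF_neg.
under eq_bigr => i _ do rewrite e.
rewrite (bigID (mem S)) /= [X in _ = _ *: X](bigID (mem S)) /= -!mul_polyC.
under eq_bigr => i iS do rewrite iS.
rewrite prodrN.
under [X in _ * X]eq_bigr => i iS do rewrite (negbTE iS).
by rewrite rmorph_sign mulrA.
Qed.

Definition tau (t : {ffun 'I_d -> C}) : {set 'I_d} := [set i | val (t i) \in A].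
Definition Tp p := \sum_(t | #|tau t| == p) Ft t.

Lemma Tp_eq0 p : Tp p = ('C(d, p)%:R * (-1) ^+ p) *: \sum_(t in family (QA set0)) Ft t.
Proof.
rewrite /Tp (partition_big tau [pred S : {set 'I_d} | #|S| == p]) //=.
rewrite (eq_bigr (fun S => (-1) ^+ p *: \sum_(t in family (QA set0)) Ft t)); last first.
  move=> S /eqP hS; rewrite -hS -flip; apply: eq_bigl => t.
  apply/andP/familyP => [[_ /eqP <-] i | h].
    by rewrite unfold_in /QA /tau inE eqxx.
  have tS : tau t = S.
    apply/setP => i; rewrite inE; have := h i; rewrite unfold_in /QA /= => /eqP.
    by move=> ->.
  by rewrite tS hS.
rewrite sumr_const scalerMnl; congr (_ *: _).
rewrite -mulr_natl; congr (_ * _); congr (_ %:R).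
have := card_draws 'I_d p; rewrite card_ord => <-; apply: eq_card => S.
by rewrite !inE.
Qed.

Lemma Tp_eq p : Tp p = ((-1) ^+ p * 'C(d, p)%:R) *: Tp 0.
Proof. by rewrite !Tp_eq0 bin0 expr0 mulr1 scale1r mulrC. Qed.

Lemma Ft_noninj (t : {ffun 'I_d -> C}) : ~~ injectiveb t -> Vd t = 0.
Proof.
case/injectivePn => i1 [i2 ne e]; rewrite /Vd.
apply: (determinant_alternate ne) => j; by rewrite !mxE e.
Qed.

Lemma prod_bij (S : {fset L}) (t : {ffun 'I_d -> C}) (g : L -> {poly L}) :
  injectiveb t -> (forall i, val (t i) \in S) -> #|` S| = d ->
  \prod_i g (val (t i)) = \prod_(s <- S) g s.
Proof.
move=> /injectiveP inj tS hS.
rewrite -(big_map (fun i => val (t i)) xpredT g); apply: perm_big.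
have U1 : uniq [seq val (t i) | i <- index_enum 'I_d].
  rewrite map_inj_uniq ?index_enum_uniq //.
  by move=> i j /val_inj /inj.
have sub : {subset [seq val (t i) | i <- index_enum 'I_d] <= S}.
  by move=> x /mapP [i _ ->].
apply: uniq_perm; [exact: U1 | exact: fset_uniq | ].
have hsz : (size S <= size [seq val (t i) | i <- index_enum 'I_d])%N.
  by rewrite size_map /index_enum unlock -enumT -cardT card_ord hS.
exact: (uniq_min_size U1 sub hsz).2.
Qed.

Definition kap : L := \prod_(i < d) \prod_(j < d | (i < j)%N) (-1).
Definition Ys (S : {fset L}) : {poly L} := \prod_(s <- S) yy C s.
Definition ee (S : {fset L}) (k : 'I_d) : L := nth 0 S k.
Definition WM (S : {fset L}) : 'M[L]_d := \matrix_(k, j) (ee S k) ^+ j.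

Lemma Ft_fam (S : {fset L}) (t : {ffun 'I_d -> C}) : (forall i, val (t i) \in S) -> #|` S| = d ->
  Ft t = (Vd t * \prod_i (val (t i)) ^+ i) *: Ys S.
Proof.
move=> tS hS; case: (boolP (injectiveb t)) => inj.
  rewrite /Ft prod_scale scalerA /Ys; congr (_ *: _).
  by apply: prod_bij.
by rewrite /Ft Ft_noninj // !mul0r !scale0r.
Qed.

Lemma sumS (S : {fset L}) (f : L -> L) : S `<=` C -> #|` S| = d ->
  \sum_(c : C | val c \in S) f (val c) = \sum_(k < d) f (ee S k).
Proof.
move=> SC hS.
rewrite -(big_seq_fsetE _ C (fun c => c \in S) f) big_fset_condE.
have -> : [fset i in C | i \in S] = S.
  apply/fsetP => x; rewrite in_fset /= !inE; case xS: (x \in S); rewrite ?andbF //= ?andbT.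
  by have := fsubsetP SC x xS; rewrite !inE.
by rewrite (big_nth 0) hS big_mkord.
Qed.

Lemma sum_fam_Vd (S : {fset L}) : S `<=` C -> #|` S| = d ->
  \sum_(t in family (fun _ (c : C) => val c \in S)) (Vd t * \prod_i (val (t i)) ^+ i)
  = \det (WM S) ^+ 2.
Proof.
move=> SC hS.
rewrite (eq_bigr (fun t : {ffun 'I_d -> C} => \sum_(s : 'S_d) (-1) ^+ s *
     \prod_i (val (t i)) ^+ (s i + i))); last first.
  move=> t _; rewrite /Vd /determinant mulr_suml; apply: eq_bigr => s _.
  rewrite -mulrA; congr (_ * _); rewrite -big_split /=; apply: eq_bigr => i _.
  by rewrite mxE exprD.
rewrite exchange_big /= expr2 -{1}det_tr -det_mulmx /determinant.
apply: eq_bigr => s _; rewrite -mulr_sumr; congr (_ * _).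
rewrite -(bigA_distr_big_dep _ (fun i (c : C) => (val c) ^+ (s i + i))) /=.
apply: eq_bigr => i _.
etransitivity; first exact: (sumS (fun x => x ^+ (s i + i)) SC hS).
rewrite !mxE; apply: eq_bigr => k _.
by rewrite !mxE -exprD addnC.
Qed.

Lemma det_WM (S : {fset L}) :
  \det (WM S) = \prod_(i < d) \prod_(j < d | (i < j)%N) (ee S j - ee S i).
Proof.
have -> : WM S = (Vandermonde d (\row_k ee S k))^T.
  by apply/matrixP => i j; rewrite !mxE.
by rewrite det_tr det_Vandermonde; apply: eq_bigr => i _; apply: eq_bigr => j _; rewrite !mxE.
Qed.

Lemma Dl_WM (S : {fset L}) : #|` S| = d -> Dl S = kap * \det (WM S) ^+ 2.
Proof.
move=> hS; rewrite /Dl (big_nth 0) hS big_mkord.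
have inner (k : 'I_d) : \prod_(s' <- S `\ nth 0 S k) (nth 0 S k - s') =
    \prod_(l < d | (k < l)%N) (ee S k - ee S l) * \prod_(l < d | (l < k)%N) (ee S k - ee S l).
  rewrite (@eq_fbigl_cond _ _ _ _ (S `\ nth 0 S k) S xpredT (fun x => x != nth 0 S k)); last first.
    have E y : (y \in S `\ (nth 0 S k)) = (y \in S) && (y != nth 0 S k).
      by rewrite !inE andbC.
    by move=> x; rewrite !in_fset /= -[in LHS]topredE /= andbT; exact: E x.
  rewrite (big_nth 0) hS big_mkord (bigID (fun l : 'I_d => (k < l)%N)) /=.
  have kS : (k < size S)%N by rewrite hS.
  congr (_ * _); apply: eq_bigl => l.
    have lS : (l < size S)%N by rewrite hS.
    rewrite nth_uniq ?fset_uniq //.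
    by case: (ltngtP k l) => // ->; rewrite eqxx.
  have lS : (l < size S)%N by rewrite hS.
  rewrite nth_uniq ?fset_uniq //.
  by case: (ltngtP k l) => //= ->; rewrite eqxx.
under eq_bigr => k _ do rewrite inner.
rewrite big_split /= det_WM expr2 mulrA; congr (_ * _).
  rewrite /kap -big_split /=; apply: eq_bigr => i _.
  rewrite -big_split /=; apply: eq_bigr => j _.
  by rewrite mulN1r opprB.
by rewrite (exchange_big_dep xpredT).
Qed.

Lemma KL (S : {fset L}) : S `<=` C -> #|` S| = d ->
  WW C S = kap *: \sum_(t in family (fun _ (c : C) => val c \in S)) Ft t.
Proof.
move=> SC hS.
rewrite (eq_bigr (fun t : {ffun 'I_d -> C} => (Vd t * \prod_i (val (t i)) ^+ i) *: Ys S)); last first.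
  by move=> t /familyP tS; apply: Ft_fam => // i; exact: tS i.
by rewrite -scaler_suml sum_fam_Vd // scalerA /WW Dl_WM.
Qed.

Lemma CNT (X R : {fset L}) k (x : {poly L}) : R `<=` X -> (k <= #|` R|)%N ->
  \sum_(A' <- fpowerset X | #|` A'| == k) (if R `<=` A' then x else 0)
  = if #|` R| == k then x else 0.
Proof.
move=> RX hk; rewrite big_mkcond /=; case: eqP => hR.
  rewrite (bigD1_seq R) ?fset_uniq ?fpowersetE //= hR eqxx fsubset_refl /=.
  rewrite big1 ?addr0 // => A' nA'.
  case: eqP => // cA'; case: ifP => // RA'.
  by move: nA'; rewrite eq_sym eqEfcard RA' cA' hR leqnn.
rewrite big1 // => A' _; case: eqP => // cA'; case: ifP => // RA'.
by have := fsubset_leq_card RA'; rewrite cA' => h; case: hR; apply/eqP; rewrite eqn_leq h hk.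
Qed.

Definition RA (t : {ffun 'I_d -> C}) : {fset L} :=
  [fset x in [seq val (t i) | i <- enum (tau t)]].
Definition RB (t : {ffun 'I_d -> C}) : {fset L} :=
  [fset x in [seq val (t i) | i <- enum (~: tau t)]].

Lemma memR (t : {ffun 'I_d -> C}) (T : {set 'I_d}) x :
  (x \in [fset x in [seq val (t i) | i <- enum T]]) = [exists i in T, val (t i) == x].
Proof.
rewrite in_fset /=; apply/mapP/existsP => [[i iT ->]|[i /andP[iT /eqP <-]]].
  by exists i; rewrite -mem_enum iT eqxx.
by exists i; rewrite ?mem_enum.
Qed.

Lemma cardR (t : {ffun 'I_d -> C}) (T : {set 'I_d}) : injectiveb t ->
  #|` [fset x in [seq val (t i) | i <- enum T]]| = #|T|.
Proof.
move=> /injectiveP inj; rewrite card_fseq undup_id ?size_map -?cardE //.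
rewrite map_inj_uniq ?enum_uniq // => i j /val_inj; exact: inj.
Qed.

Lemma famR (t : {ffun 'I_d -> C}) A' B' : A' `<=` A -> B' `<=` B ->
  (t \in family (fun _ (c : C) => val c \in A' `|` B')) = (RA t `<=` A') && (RB t `<=` B').
Proof.
move=> /fsubsetP hA /fsubsetP hB.
have dis x : x \in A -> x \in B -> False.
  by move=> xA xB; have := fdisjointP dAB x xA; rewrite xB.
have vC i : val (t i) \in C := valP (t i).
apply/familyP/andP => [h | [/fsubsetP h1 /fsubsetP h2] i].
  split; apply/fsubsetP => x; rewrite memR => /existsP [i /andP[iT /eqP <-]];
    have := h i; rewrite unfold_in /= !inE; move: iT; rewrite ?inE /tau ?inE => iT.
    case/orP => // /hB vB; exfalso; exact: dis iT vB.
  case/orP => // /hA vA; by rewrite vA in iT.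
rewrite unfold_in /= inE.
case iT: (i \in tau t).
  by rewrite h1 // memR; apply/existsP; exists i; rewrite iT eqxx.
by rewrite h2 ?orbT // memR; apply/existsP; exists i; rewrite inE iT eqxx.
Qed.

Lemma PT (t : {ffun 'I_d -> C}) p q : (p + q)%N = d ->
  \sum_(A' <- fpowerset A | #|` A'| == p) \sum_(B' <- fpowerset B | #|` B'| == q)
     (if t \in family (fun _ (c : C) => val c \in A' `|` B') then Ft t else 0)
  = if #|tau t| == p then Ft t else 0.
Proof.
move=> hpq; case: (boolP (injectiveb t)) => inj; last first.
  have F0 : Ft t = 0 by rewrite /Ft Ft_noninj // scale0r.
  rewrite F0 if_same big1 // => A' _; rewrite big1 // => B' _; exact: if_same.
have sRA : RA t `<=` A.
  by apply/fsubsetP => x; rewrite memR => /existsP[i /andP[]]; rewrite inE => h /eqP <-.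
have sRB : RB t `<=` B.
  apply/fsubsetP => x; rewrite memR => /existsP[i /andP[]]; rewrite !inE => h /eqP <-.
  by have := valP (t i); rewrite !inE (negbTE h).
have cA : #|` RA t| = #|tau t| by apply: cardR.
have cB : #|` RB t| = (d - #|tau t|)%N.
  by rewrite /RB cardR // cardsCs setCK card_ord.
rewrite big_seq_cond (eq_bigr (fun A' => if RA t `<=` A' then
   \sum_(B' <- fpowerset B | #|` B'| == q) (if RB t `<=` B' then Ft t else 0) else 0)); last first.
  move=> A' /andP[]; rewrite fpowersetE => hA' _.
  case: ifP => hRA; last first.
    rewrite big_seq_cond big1 // => B' /andP[]; rewrite fpowersetE => hB' _.
    by rewrite famR // hRA.
  rewrite big_seq_cond [RHS]big_seq_cond; apply: eq_bigr => B' /andP[]; rewrite fpowersetE => hB' _.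
  by rewrite famR // hRA.
rewrite -big_seq_cond.
have hT : (#|tau t| <= d)%N by have := max_card (mem (tau t)); rewrite card_ord.
case: (ltngtP #|tau t| p) => h.
- have hq : (q <= #|` RB t|)%N by rewrite cB; lia.
  under eq_bigr => A' _ do rewrite (CNT (Ft t) sRB hq) cB.
  have -> : ((d - #|tau t|)%N == q) = false by apply/negbTE; lia.
  by rewrite big1 // => A' _; rewrite if_same.
- have hp : (p <= #|` RA t|)%N by rewrite cA; lia.
  rewrite (CNT _ sRA hp) cA.
  by have -> : (#|tau t| == p) = false by apply/negbTE; lia.
- have hq : (q <= #|` RB t|)%N by rewrite cB; lia.
  under eq_bigr => A' _ do rewrite (CNT (Ft t) sRB hq) cB.
  have -> : ((d - #|tau t|)%N == q) by apply/eqP; lia.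
  have hp : (p <= #|` RA t|)%N by rewrite cA; lia.
  by rewrite (CNT _ sRA hp) cA h eqxx.
Qed.

Definition UU p q := \sum_(A' <- fpowerset A | #|` A'| == p)
   \sum_(B' <- fpowerset B | #|` B'| == q) WW C (A' `|` B').

Lemma UU_Tp p q : (p + q)%N = d -> UU p q = kap *: Tp p.
Proof.
move=> hpq; rewrite /UU /Tp.
rewrite big_seq_cond (eq_bigr (fun A' => kap *: \sum_(B' <- fpowerset B | #|` B'| == q)
     \sum_t (if t \in family (fun _ (c : C) => val c \in A' `|` B') then Ft t else 0))); last first.
  move=> A' /andP[]; rewrite fpowersetE => hA' /eqP cA'.
  rewrite scaler_sumr big_seq_cond [RHS]big_seq_cond; apply: eq_bigr => B' /andP[].
  rewrite fpowersetE => hB' /eqP cB'.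
  rewrite KL -?big_mkcond //; first by apply: fsetUSS.
  rewrite cardfsU; have -> : A' `&` B' = fset0.
    by apply/eqP; rewrite fsetI_eq0; apply: (disj_sub dAB).
  by rewrite cardfs0 subn0 cA' cB'.
rewrite -scaler_sumr -big_seq_cond; congr (_ *: _).
under eq_bigr => A' _ do rewrite exchange_big.
rewrite exchange_big [RHS]big_mkcond /=; apply: eq_bigr => t _.
by rewrite -(PT t hpq).
Qed.

End Tup.

Section Core.
Variable L : fieldType.

Lemma Syl_UU (A B : {fset L}) p q : [disjoint A & B] ->
  Syl p q A B = ((-1) ^+ (q * (#|` A| - p)) * Rres A B) *: UU A B p q.
Proof.
move=> dAB; rewrite /Syl /UU scaler_sumr big_seq_cond [RHS]big_seq_cond.
apply: eq_bigr => A' /andP[]; rewrite fpowersetE => hA' /eqP cA'.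
rewrite scaler_sumr big_seq_cond [RHS]big_seq_cond.
apply: eq_bigr => B' /andP[]; rewrite fpowersetE => hB' /eqP cB'.
by rewrite TL // cA' cB'.
Qed.

Lemma sign_id (m p q : nat) : (p + q < m)%N ->
  (-1) ^+ (q * (m - p)) * (-1) ^+ p =
  (-1) ^+ (p * (m - (p + q))) * (-1) ^+ ((p + q) * (m - 0)) :> L.
Proof.
move=> h; rewrite -!exprD -[LHS]signr_odd -[RHS]signr_odd; congr (_ ^+ _).
have [k ->] : exists k, m = (p + q + k)%N by exists (m - (p + q))%N; lia.
have -> : (p + q + k - p = q + k)%N by lia.
have -> : (p + q + k - (p + q) = k)%N by lia.
rewrite subn0 !oddD !oddM !oddD.
by case: (odd p); case: (odd q); case: (odd k).
Qed.

Lemma core (A B : {fset L}) p q : [disjoint A & B] ->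
  (p + q < #|` A|)%N -> (p + q < #|` B|)%N ->
  Syl p q A B =
    ((-1) ^+ (p * (#|` A| - (p + q))) * ('C(p + q, p))%:R) *: Syl 0 (p + q) A B.
Proof.
move=> dAB hA hB.
have hN : (2 * (p + q) < #|` A `|` B|)%N.
  rewrite cardfsU; have -> : A `&` B = fset0 by apply/eqP; rewrite fsetI_eq0.
  by rewrite cardfs0 subn0; lia.
rewrite !Syl_UU // (UU_Tp dAB hN (erefl _)) (@UU_Tp _ _ _ dAB _ hN 0 (p + q)) //.
rewrite (Tp_eq dAB hN p) !scalerA; congr (_ *: _).
have e : _ = _ :> L := sign_id hA.
rewrite (_ : (-1) ^+ (q * (#|` A| - p)) * Rres A B * kap L (p + q) *
   ((-1) ^+ p * 'C(p + q, p)%:R) = ((-1) ^+ (q * (#|` A| - p)) * (-1) ^+ p) *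
   (Rres A B * kap L (p + q) * 'C(p + q, p)%:R)); last by ring.
by rewrite e; ring.
Qed.

End Core.

Section Gen.
Variable K : fieldType.

Definition RG (R : comUnitRingType) (al be : K -> R) (Y Z : {fset K}) : R :=
  \prod_(y <- Y) \prod_(z <- Z) (al y - be z).
Definition RXG (R : comUnitRingType) (al : K -> R) (Z : {fset K}) : {poly R} :=
  \prod_(z <- Z) ('X - (al z)%:P).
Definition SylG (R : comUnitRingType) (al be : K -> R) (p q : nat) (A B : {fset K}) : {poly R} :=
  \sum_(A' <- fpowerset A | #|` A'| == p)
   \sum_(B' <- fpowerset B | #|` B'| == q)
     ((RG al be A' B' * RG al be (A `\` A') (B `\` B'))
        / (RG al al A' (A `\` A') * RG be be B' (B `\` B')))
       *: (RXG al A' * RXG be B').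

Lemma Syl_G p q A B : Syl p q A B = SylG (R:=K) id id p q A B.
Proof. by []. Qed.

Lemma SylG_ext (R : comUnitRingType) (al al' be be' : K -> R) p q A B :
  al =1 al' -> be =1 be' -> SylG al be p q A B = SylG al' be' p q A B.
Proof.
move=> ea eb.
have eRG (f g f' g' : K -> R) Y Z : f =1 f' -> g =1 g' -> RG f g Y Z = RG f' g' Y Z.
  by move=> e1 e2; apply: eq_bigr => y _; apply: eq_bigr => z _; rewrite e1 e2.
have eRX (f f' : K -> R) Z : f =1 f' -> RXG f Z = RXG f' Z.
  by move=> e1; apply: eq_bigr => z _; rewrite e1.
apply: eq_bigr => A' _; apply: eq_bigr => B' _.
rewrite (eRG al be al' be' A' B') // (eRG al be al' be' (A `\` A') (B `\` B')) //.
rewrite (eRG al al al' al' A' (A `\` A')) // (eRG be be be' be' B' (B `\` B')) //.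
by rewrite (eRX al al' A') // (eRX be be' B').
Qed.

Lemma SylG_morph (R S : comUnitRingType) (f : {rmorphism R -> S}) (al be : K -> R) p q A B :
  (forall A', A' `<=` A -> RG al al A' (A `\` A') \is a GRing.unit) ->
  (forall B', B' `<=` B -> RG be be B' (B `\` B') \is a GRing.unit) ->
  map_poly f (SylG al be p q A B) = SylG (f \o al) (f \o be) p q A B.
Proof.
move=> uA uB.
have fRG (g h : K -> R) Y Z : f (RG g h Y Z) = RG (f \o g) (f \o h) Y Z.
  rewrite /RG rmorph_prod; apply: eq_bigr => y _.
  by rewrite rmorph_prod; apply: eq_bigr => z _; rewrite rmorphB.
have fRX (g : K -> R) Z : map_poly f (RXG g Z) = RXG (f \o g) Z.
  rewrite /RXG (_ : map_poly f (\prod_(z <- Z) ('X - (g z)%:P)) =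
     \prod_(z <- Z) map_poly f ('X - (g z)%:P)); last exact: rmorph_prod.
  by apply: eq_bigr => z _; rewrite map_polyXsubC.
have msum (I : Type) (r : seq I) (P : pred I) (F : I -> {poly R}) :
   map_poly f (\sum_(i <- r | P i) F i) = \sum_(i <- r | P i) map_poly f (F i).
  exact: rmorph_sum.
rewrite /SylG msum big_seq_cond [RHS]big_seq_cond; apply: eq_bigr => A'.
rewrite fpowersetE => /andP[hA' _].
rewrite msum big_seq_cond [RHS]big_seq_cond; apply: eq_bigr => B'.
rewrite fpowersetE => /andP[hB' _].
rewrite map_polyZ (_ : map_poly f (RXG al A' * RXG be B') =
   map_poly f (RXG al A') * map_poly f (RXG be B')); last exact: rmorphM.
rewrite !fRX; congr (_ *: _).
by rewrite rmorphM rmorphV ?unitrM ?uA ?uB // !rmorphM !fRG.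
Qed.

End Gen.

Section Img.
Variables (K L : fieldType) (f : K -> L).
Hypothesis finj : injective f.

Lemma perm_enum_finmem (T : choiceType) (Y : {fset T}) : perm_eq (enum_finmem (mem Y)) Y.
Proof.
apply: uniq_perm; [exact: enum_finmem_uniq | exact: fset_uniq | ].
by move=> x; rewrite enum_finmemE.
Qed.

Lemma big_img (R : Type) (idx : R) (op : Monoid.com_law idx) (Y : {fset K}) (G : L -> R) :
  \big[op/idx]_(y <- f @` Y) G y = \big[op/idx]_(y <- Y) G (f y).
Proof.
rewrite big_imfset; last by move=> x y _ _; apply: finj.
by apply: perm_big; apply: perm_enum_finmem.
Qed.

Lemma card_img (Y : {fset K}) : #|` f @` Y| = #|` Y|.
Proof. by rewrite card_imfset //; apply: perm_size; apply: perm_enum_finmem. Qed.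

Lemma imgD (Y Z : {fset K}) : f @` (Y `\` Z) = f @` Y `\` f @` Z.
Proof.
apply/fsetP => x; rewrite inE; apply/imfsetP/andP => /=.
  move=> [a]; rewrite inE => /andP[aZ aY] ->; split; last exact: in_imfset.
  by rewrite mem_imfset.
move=> [xZ /imfsetP [a /= aY ex]]; exists a => //; rewrite inE aY andbT.
by apply: contra xZ => aZ; rewrite ex in_imfset.
Qed.

Lemma img_pow (A : {fset K}) : fpowerset (f @` A) = [fset (f @` Y) | Y : {fset K} in fpowerset A].
Proof.
apply/fsetP => X; rewrite fpowersetE; apply/idP/imfsetP => /=.
  move=> XA; exists [fset a in A | f a \in X].
    by rewrite fpowersetE; apply/fsubsetP => a; rewrite in_fset /= inE => /andP[].
  apply/fsetP => x; apply/idP/imfsetP => /=.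
    move=> xX; have := fsubsetP XA x xX; case/imfsetP => a /= aA ex.
    by exists a => //; rewrite in_fset /= inE aA /= -ex.
  by move=> [a]; rewrite in_fset /= inE => /andP[_ h] ->.
move=> [Y]; rewrite fpowersetE => YA ->.
by apply/fsubsetP => x /imfsetP [a /= aY ->]; rewrite in_imfset // (fsubsetP YA).
Qed.

Lemma IMG (V : zmodType) (A : {fset K}) p (G : {fset L} -> V) :
  \sum_(X <- fpowerset (f @` A) | #|` X| == p) G X
  = \sum_(Y <- fpowerset A | #|` Y| == p) G (f @` Y).
Proof.
rewrite img_pow big_mkcond big_imfset /=; last first.
  move=> Y Z _ _ /= e; apply/fsetP => x.
  by rewrite -(mem_imfset imfset_key (mem Y) finj) e mem_imfset.
rewrite (perm_big _ (perm_enum_finmem _)) [RHS]big_mkcond /=.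
by apply: eq_bigr => Y _; rewrite card_img.
Qed.

End Img.

Lemma SylG_image (K L : fieldType) (f g : K -> L) (finj : injective f) (ginj : injective g)
  p q (A B : {fset K}) :
  SylG (R:=L) f g p q A B = Syl p q (f @` A) (g @` B).
Proof.
have eR (h h' : K -> L) (hi : injective h) (hi' : injective h') Y Z :
    Rres (h @` Y) (h' @` Z) = RG h h' Y Z.
  by rewrite /Rres big_img //; apply: eq_bigr => y _; rewrite big_img.
have eX (h : K -> L) (hi : injective h) Y : RresX (h @` Y) = RXG h Y.
  by rewrite /RresX big_img.
rewrite /Syl /SylG (IMG finj) big_seq_cond [RHS]big_seq_cond; apply: eq_bigr => Y /andP[].
rewrite fpowersetE => hY _.
rewrite (IMG ginj) big_seq_cond [RHS]big_seq_cond; apply: eq_bigr => Z /andP[].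
rewrite fpowersetE => hZ _.
by rewrite -!imgD // !eR // !eX.
Qed.

Section Final.
Variable K : fieldType.


Lemma RG_const (al : K -> {poly K}) (Y Z : {fset K}) :
  (forall a b, al a - al b = (a - b)%:P) -> RG al al Y Z = (Rres Y Z)%:P.
Proof.
move=> h; rewrite /RG /Rres rmorph_prod; apply: eq_bigr => y _.
by rewrite rmorph_prod; apply: eq_bigr => z _; rewrite h.
Qed.

Lemma RG_unit (al : K -> {poly K}) (A A' : {fset K}) :
  (forall a b, al a - al b = (a - b)%:P) -> RG al al A' (A `\` A') \is a GRing.unit.
Proof.
move=> h; rewrite RG_const // poly_unitE size_polyC coefC /= unitfE.
by rewrite Rres_neq0 //; apply: disjD.
Qed.

End Final.

Unset Implicit Arguments.

Theorem proposition3p3 (K : fieldType) (A B : {fset K}) (p q : nat) :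
  (p <= #|` A|)%N -> (q <= #|` B|)%N ->
  (p + q < #|` A|)%N -> (p + q < #|` B|)%N ->
  Syl p q A B =
    ((-1) ^+ (p * (#|` A| - (p + q))) * ('C(p + q, p))%:R) *: Syl 0 (p + q) A B.
Proof.
move=> _ _ hA hB.
pose F := {fraction {poly K}}.
pose phi := (@tofrac {poly K}).
pose al0 := (fun a : K => a%:P) : K -> {poly K}.
pose be0 := (fun b : K => (b%:P + 'X)%R) : K -> {poly K}.
have hal : forall a b, al0 a - al0 b = (a - b)%:P by move=> a b; rewrite rmorphB.
have hbe : forall a b, be0 a - be0 b = (a - b)%:P.
  by move=> a b; rewrite /be0 rmorphB /=; ring.
have inj_phi : injective phi by move=> x y /eqP; rewrite tofrac_eq => /eqP.
have inj_al : injective (phi \o al0) by move=> x y /inj_phi /polyC_inj.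
have inj_be : injective (phi \o be0).
  by move=> x y /inj_phi /eqP; rewrite -subr_eq0 hbe polyC_eq0 subr_eq0 => /eqP.
set AL := (phi \o al0) @` A; set BL := (phi \o be0) @` B.
have cAL : #|` AL| = #|` A| by apply: card_img.
have cBL : #|` BL| = #|` B| by apply: card_img.
have dis : [disjoint AL & BL].
  apply/fdisjointP => x /imfsetP [a /= aA ->]; apply/imfsetP => -[b /= bB].
  move/inj_phi => e; have := congr1 (fun r : {poly K} => size r) e.
  rewrite /al0 /be0 addrC size_XaddC; move: (size_polyC a).
  by case: (a == 0) => /= ->.
have hAL : (p + q < #|` AL|)%N by rewrite cAL.
have hBL : (p + q < #|` BL|)%N by rewrite cBL.
have key := core dis hAL hBL.
rewrite cAL -!SylG_image // in key.
pose P r s := SylG (R:={poly K}) al0 be0 r s A B.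
have mP r s : map_poly phi (P r s) = SylG (phi \o al0) (phi \o be0) r s A B.
  by apply: SylG_morph => A' _; apply: RG_unit.
set c := (-1) ^+ (p * (#|` A| - (p + q))) * ('C(p + q, p))%:R.
have eP : P p q = (c%:P) *: P 0 (p + q)%N.
  apply: (map_inj_poly inj_phi (rmorph0 _)).
  rewrite map_polyZ !mP key; congr (_ *: _).
  by rewrite /c !rmorphM !rmorph_sign !rmorph_nat.
pose ev := horner_eval (0 : K).
have mE r s : map_poly ev (P r s) = Syl r s A B.
  rewrite SylG_morph; last by move=> A' _; apply: RG_unit.
    by rewrite Syl_G; apply: SylG_ext => a /=; rewrite /ev /horner_eval /al0 /be0 ?hornerD hornerC ?hornerX ?addr0.
  by move=> B' _; apply: RG_unit.
by rewrite -!mE eP map_polyZ /ev /= /horner_eval hornerC.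
Qed.
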